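(* Let $(b,c)$ be a connected graph over a countable set $X$ with an action of a group $G$ such that $H=H_{b,c}$ is $G$-invariant, fix $x_0\in X$, let $R\subseteq G$ be a subgroup, and let $f\in\mathcal{K}^R$ be harmonic. Let $\mu_f$ be a Borel probability measure on $\mathrm{ex}\,\mathcal{K}^R$ representing $f$ (as provided by Choquet's theorem), i.e. $f(x)=\int_{\mathrm{ex}\,\mathcal{K}^R}k(x)\,d\mu_f(k)$ for all $x\in X$. Then the set $\{k\in\mathrm{ex}\,\mathcal{K}^R: Hk\neq0\}$ is a $\mu_f$-null set.
   Context: A graph over $X$ is $(b,c)$ with $b:X\times X\to[0,\infty)$, $c:X\to\mathbb{R}$, $\sum_yb(x,y)<\infty$ ($b$ need not be symmetric); connected: any two points are joined by a finite sequence $y_1,\dots,y_n$ with $b(y_i,y_{i+1})>0$. $C(X)$ carries the product topology. $H_{b,c}f(x)=\sum_yb(x,y)(f(x)-f(y))+c(x)f(x)$ on $\mathrm{Dom}(H)=\{f:\sum_yb(x,y)|f(y)|<\infty\ \forall x\}$; harmonic: $Hf=0$; $\mathcal{H}^+$: nonnegative nonzero harmonic functions. $T_gf(x)=f(g^{-1}x)$; $H$ is $G$-invariant if $T_g$ preserves $\mathrm{Dom}(H)$ and $HT_g=T_gH$. $\mathcal{K}$ is the closure in $C(X)$ of $\{f\in\mathcal{H}^+:f(x_0)=1\}$ (a compact convex set), and $\mathcal{K}^R=\{f\in\mathcal{K}: T_gf=f\ \forall g\in R\}$; $\mathrm{ex}$ denotes the set of extreme points. *)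

(* Defs.v *)
From HB Require Import structures.
From mathcomp Require Import all_boot all_order all_algebra.
From mathcomp Require Import all_classical all_reals all_analysis.
Set Implicit Arguments. Unset Strict Implicit. Unset Printing Implicit Defensive.
Import Order.TTheory GRing.Theory Num.Theory.
Import numFieldNormedType.Exports.
Local Open Scope classical_set_scope.
Local Open Scope ring_scope.

Section GraphDefs.
Context {X : countType} {R : realType}.

Definition is_graph (b : X -> X -> R) : Prop :=
  (forall x y, 0 <= b x y) /\ (forall x, summable setT (fun y => (b x y)%:E)).

Definition graph_connected (b : X -> X -> R) : Prop :=
  forall x y : X, exists s : seq X,
    path (fun u v => 0 < b u v) x s /\ last x s = y.

Definition domH (b : X -> X -> R) (f : X -> R) : Prop :=
  forall x, summable setT (fun y => (b x y * f y)%:E).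

Definition rsum (u : X -> R) : R :=
  fine (\esum_(y in setT) (fun y => (u y)%:E)^\+ y
        - \esum_(y in setT) (fun y => (u y)%:E)^\- y)%E.

Definition Hop (b : X -> X -> R) (c : X -> R) (f : X -> R) : X -> R :=
  fun x => rsum (fun y => b x y * (f x - f y)) + c x * f x.

Definition graph_harmonic (b : X -> X -> R) (c : X -> R) (f : X -> R) : Prop :=
  domH b f /\ forall x, Hop b c f x = 0.

Definition Hplus (b : X -> X -> R) (c : X -> R) : set (X -> R) :=
  [set f | graph_harmonic b c f /\ (forall x, 0 <= f x) /\ f <> (fun _ => 0)].

Definition Kset (b : X -> X -> R) (c : X -> R) (x0 : X) : set (X -> R) :=
  @closure {ptws X -> R} [set f | Hplus b c f /\ f x0 = 1].

End GraphDefs.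

Definition is_group_action {G X : Type} (mul : G -> G -> G) (inv : G -> G)
    (one : G) (act : G -> X -> X) : Prop :=
  (forall g h k, mul g (mul h k) = mul (mul g h) k) /\
  (forall g, mul one g = g) /\ (forall g, mul g one = g) /\
  (forall g, mul (inv g) g = one) /\ (forall g, mul g (inv g) = one) /\
  (forall x, act one x = x) /\
  (forall g h x, act (mul g h) x = act g (act h x)).

Definition is_subgroup {G : Type} (mul : G -> G -> G) (inv : G -> G)
    (one : G) (Rg : set G) : Prop :=
  [/\ Rg one, (forall g h, Rg g -> Rg h -> Rg (mul g h)) &
      (forall g, Rg g -> Rg (inv g))].

Definition Tg {G X V : Type} (inv : G -> G) (act : G -> X -> X) (g : G)
    (f : X -> V) : X -> V := fun x => f (act (inv g) x).

Definition H_invariant {G : Type} {X : countType} {R : realType}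
    (inv : G -> G) (act : G -> X -> X) (b : X -> X -> R) (c : X -> R) : Prop :=
  forall g f, domH b f ->
    domH b (Tg inv act g f) /\ Hop b c (Tg inv act g f) = Tg inv act g (Hop b c f).

Definition KRset {G : Type} {X : countType} {R : realType}
    (inv : G -> G) (act : G -> X -> X) (b : X -> X -> R) (c : X -> R) (x0 : X)
    (Rg : set G) : set (X -> R) :=
  [set f | Kset b c x0 f /\ forall g, Rg g -> Tg inv act g f = f].

Definition extreme {X : Type} {R : realType} (A : set (X -> R)) : set (X -> R) :=
  [set k | A k /\ forall f g (t : R), A f -> A g -> 0 < t < 1 ->
      k = (fun x => t * f x + (1 - t) * g x) -> f = g].

Definition borelC (X : countType) (R : realType) :=
  g_sigma_algebraType (@open {ptws X -> R}).

(* Main.v *)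
Require Import Defs.
From HB Require Import structures.
From mathcomp Require Import all_boot all_order all_algebra.
From mathcomp Require Import all_classical all_reals all_analysis.
From mathcomp Require Import measurable_realfun.
Import Order.TTheory GRing.Theory Num.Theory.
Import numFieldNormedType.Exports.
Local Open Scope classical_set_scope.
Local Open Scope ring_scope.

Section Ser.
Context {X : countType} {R : realType}.
Local Open Scope ereal_scope.

Definition ser (a : X -> \bar R) (n : nat) : \bar R :=
  if @pickle_inv X n is Some y then a y else 0.

Lemma ser_ge0 a : (forall y, 0 <= a y) -> forall n, 0 <= ser a n.
Proof. by move=> a0 n; rewrite /ser; case: pickle_inv. Qed.

Lemma esum_ser (a : X -> \bar R) : (forall y, 0 <= a y) ->
  \esum_(y in [set: X]) a y = \sum_(n <oo) ser a n.
Proof.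
move=> a0; rewrite nneseries_esumT; last exact: ser_ge0.
rewrite (esumID (range (@pickle X))); last by move=> n _; exact: ser_ge0.
rewrite [X in _ + X]esum1 ?adde0; last first.
  move=> n [_ /= nr]; rewrite /ser; case E: pickle_inv => [y|//].
  exfalso; apply: nr; exists y => //.
  by have := @pickle_invK X n; rewrite E.
rewrite setTI esum_image; last by move=> ? ? _ _; exact: (pcan_inj (@pickleK X)).
by apply: eq_esum => y _; rewrite /ser pickleK_inv.
Qed.

Lemma esumZ (r : R) (a : X -> \bar R) : (0 <= r)%R -> (forall y, 0 <= a y) ->
  \esum_(y in [set: X]) (r%:E * a y) = r%:E * \esum_(y in [set: X]) a y.
Proof.
move=> r0 a0; rewrite !esum_ser//; last by move=> y; rewrite mule_ge0.
rewrite -nneseriesZl//; last by move=> n _; exact: ser_ge0.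
by apply: eq_eseriesr => n _; rewrite /ser; case: pickle_inv => //; rewrite mule0.
Qed.

End Ser.


Section HopEq.
Context {X : countType} {R : realType}.

Lemma summable_fin (a : X -> \bar R) : (forall y, (0 <= a y)%E) ->
  summable setT a -> \esum_(y in [set: X]) a y \is a fin_num.
Proof.
move=> a0; rewrite summableE; congr (_ \is a fin_num).
by apply: eq_esum => y _; rewrite gee0_abs.
Qed.

Lemma Hop_eq (b : X -> X -> R) (c : X -> R) (g : X -> R) (x : X) :
  (forall y, 0 <= b x y) -> summable setT (fun y => (b x y)%:E) ->
  (forall y, 0 <= g y) -> summable setT (fun y => (b x y * g y)%:E) ->
  Hop b c g x = g x * fine (\esum_(y in [set: X]) (b x y)%:E)
     - fine (\esum_(y in [set: X]) (b x y * g y)%:E) + c x * g x.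
Proof.
move=> b0 sb g0 sbg; rewrite /Hop /rsum; congr (_ + _).
have -> : (fun y => (b x y * (g x - g y))%:E) =
   ((fun y => (g x * b x y)%:E) \- (fun y => (b x y * g y)%:E))%E.
  by apply/funext => y /=; rewrite -EFinB mulrBr mulrC.
have Z : \esum_(y in [set: X]) (g x * b x y)%:E =
         ((g x)%:E * \esum_(y in [set: X]) (b x y)%:E)%E.
  rewrite -esumZ; [|exact: g0|by move=> y; rewrite lee_fin].
  by apply: eq_esum => y _; rewrite EFinM.
have fb : \esum_(y in [set: X]) (b x y)%:E \is a fin_num.
  by apply: summable_fin => // y; rewrite lee_fin.
have fbg : \esum_(y in [set: X]) (b x y * g y)%:E \is a fin_num.
  by apply: summable_fin => // y; rewrite lee_fin mulr_ge0.
rewrite esumB //; first last.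
- by move=> y _; rewrite lee_fin mulr_ge0.
- by move=> y _; rewrite lee_fin mulr_ge0.
- rewrite /summable (@eq_esum _ _ _ _ (fun y => (g x * b x y)%:E)); last first.
    by move=> y _; rewrite gee0_abs// lee_fin mulr_ge0.
  by rewrite Z -ge0_fin_numE ?fin_numM// mule_ge0// ?lee_fin// esum_ge0// => y _; rewrite lee_fin.
rewrite Z fineB ?fin_numM// fineM//.
Qed.

End HopEq.


Section Top.
Context {X : countType} {R : realType}.

Definition term (b : X -> X -> R) (x : X) (g : X -> R) (i : nat) : R :=
  if @pickle_inv X i is Some y then b x y * g y else 0.

Lemma proj_cont (y : X) : continuous (fun g : {ptws X -> R} => g y).
Proof. exact: (@proj_continuous X (fun _ : X => R) y). Qed.

Lemma term_cont b x i : continuous (fun g : {ptws X -> R} => term b x g i).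
Proof.
rewrite /term; case: pickle_inv => [y|]; last exact: cst_continuous.
move=> g; apply: continuousM; first exact: cst_continuous.
exact: proj_cont.
Qed.

Lemma sum_cont b x n :
  continuous (fun g : {ptws X -> R} => \sum_(i < n) term b x g i).
Proof.
elim: n => [|n IH].
  have -> : (fun g : {ptws X -> R} => \sum_(i < 0) term b x g i) = (fun _ => 0).
    by apply/funext => g; rewrite big_ord0.
  exact: cst_continuous.
have -> : (fun g : {ptws X -> R} => \sum_(i < n.+1) term b x g i) =
   (fun g => \sum_(i < n) term b x g i + term b x g n).
  by apply/funext => g; rewrite big_ord_recr.
by move=> g; exact: (continuousD (IH g) (term_cont b x n g)).
Qed.

Lemma closed_psum b x (d : R) n :
  closed [set g : {ptws X -> R} | \sum_(i < n) term b x g i <= d * g x].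
Proof.
have -> : [set g : {ptws X -> R} | \sum_(i < n) term b x g i <= d * g x] =
  (fun g : {ptws X -> R} => d * g x - \sum_(i < n) term b x g i) @^-1`
     [set r : R | 0 <= r].
  by apply/funext => g; apply/propext; rewrite /= subr_ge0.
apply: preimage_closed; last exact: closed_ge.
move=> g _.
have h1 : {for g, continuous (fun g : {ptws X -> R} => d * g x)}.
  apply: continuousM; [exact: cst_continuous | exact: proj_cont].
exact: (continuousB h1 (sum_cont b x n g)).
Qed.

Lemma closed_nonneg (y : X) : closed [set g : {ptws X -> R} | 0 <= g y].
Proof.
have -> : [set g : {ptws X -> R} | 0 <= g y] =
  (fun g : {ptws X -> R} => g y) @^-1` [set r : R | 0 <= r] by [].
apply: preimage_closed; last exact: closed_ge.
by move=> g _; exact: proj_cont.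
Qed.

End Top.


Section KProps.
Context {X : countType} {R : realType}.
Variables (b : X -> X -> R) (c : X -> R) (x0 : X).
Hypothesis gb : is_graph b.

Definition dc (x : X) : R := fine (\esum_(y in [set: X]) (b x y)%:E) + c x.

Lemma ser_term x (g : X -> R) i :
  ser (fun y => (b x y * g y)%:E) i = (term b x g i)%:E.
Proof. by rewrite /ser /term; case: pickle_inv. Qed.

Lemma psum_le_ser x (g : X -> R) n : (forall y, 0 <= g y) ->
  ((\sum_(i < n) term b x g i)%:E <=
   \esum_(y in [set: X]) (b x y * g y)%:E)%E.
Proof.
move=> g0; have [b0 _] := gb.
rewrite esum_ser; last by move=> y; rewrite lee_fin mulr_ge0.
rewrite -sumEFin.
under eq_bigr do rewrite -ser_term.
rewrite -(big_mkord xpredT (fun i => ser (fun y => (b x y * g y)%:E) i)).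
apply: nneseries_lim_ge => i _ _.
by rewrite ser_term /term; case: pickle_inv => // y; rewrite lee_fin mulr_ge0.
Qed.

Lemma Hplus_psum g : Hplus b c g ->
  (forall y, 0 <= g y) /\ (forall x n, \sum_(i < n) term b x g i <= dc x * g x).
Proof.
move=> [[dg Hg] [g0 _]]; split => // x n.
have [b0 sb] := gb.
have := Hg x; rewrite Hop_eq//.
move=> /eqP; rewrite addrAC subr_eq0 => /eqP hS.
have fS : \esum_(y in [set: X]) (b x y * g y)%:E \is a fin_num.
  by apply: summable_fin => // y; rewrite lee_fin mulr_ge0.
have -> : dc x * g x = fine (\esum_(y in [set: X]) (b x y * g y)%:E).
  by rewrite -hS /dc mulrDl (mulrC _ (g x)).
rewrite -lee_fin fineK//.
exact: psum_le_ser.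
Qed.

Definition Cset : set {ptws X -> R} :=
  (\bigcap_(y in [set: X]) [set g : {ptws X -> R} | 0 <= g y]) `&`
  (\bigcap_(x in [set: X]) \bigcap_(n in [set: nat])
     [set g : {ptws X -> R} | \sum_(i < n) term b x g i <= dc x * g x]).

Lemma closed_Cset : closed Cset.
Proof.
apply: closedI; apply: closed_bigI => y _; first exact: closed_nonneg.
apply: closed_bigI => n _; exact: closed_psum.
Qed.

Lemma Kset_props k : Kset b c x0 k ->
  (forall y, 0 <= k y) /\ (forall x n, \sum_(i < n) term b x k i <= dc x * k x).
Proof.
move=> Kk.
have sub : [set f : {ptws X -> R} | Hplus b c f /\ f x0 = 1] `<=` Cset.
  move=> g [/Hplus_psum [g0 gs] _]; split; first by move=> y _; exact: g0.
  by move=> x _ n _; exact: gs.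
have := closureS sub Kk; rewrite -(closure_id Cset).1; last exact: closed_Cset.
move=> [C1 C2]; split => [y|x n]; first exact: C1.
exact: C2.
Qed.


Lemma nneseries_le_bound (u : nat -> \bar R) (M : \bar R) :
  (forall n, (0 <= u n)%E) -> (forall n, (\sum_(0 <= i < n) u i <= M)%E) ->
  (\sum_(i <oo) u i <= M)%E.
Proof.
move=> u0 uM; apply: lime_le; first exact: is_cvg_nneseries.
by apply: nearW => n; exact: uM.
Qed.

Lemma Kset_S k x : Kset b c x0 k ->
  (\esum_(y in [set: X]) (b x y * k y)%:E <= (dc x * k x)%:E)%E.
Proof.
move=> /Kset_props [k0 ks]; have [b0 _] := gb.
rewrite esum_ser; last by move=> y; rewrite lee_fin mulr_ge0.
apply: nneseries_le_bound.
  by apply: ser_ge0 => y; rewrite lee_fin mulr_ge0.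
move=> n; rewrite big_mkord.
under eq_bigr do rewrite ser_term.
by rewrite sumEFin lee_fin.
Qed.

Lemma Kset_fin k x : Kset b c x0 k ->
  \esum_(y in [set: X]) (b x y * k y)%:E \is a fin_num.
Proof.
move=> Kk; have [k0 _] := @Kset_props k Kk; have [b0 _] := gb.
rewrite ge0_fin_numE; last by apply: esum_ge0 => y _; rewrite lee_fin mulr_ge0.
exact: le_lt_trans (@Kset_S k x Kk) (ltry _).
Qed.

Lemma Kset_summable k x : Kset b c x0 k ->
  summable setT (fun y => (b x y * k y)%:E).
Proof.
move=> Kk; have [k0 _] := @Kset_props k Kk; have [b0 _] := gb.
rewrite /summable (@eq_esum _ _ _ _ (fun y => (b x y * k y)%:E)).
  by rewrite -ge0_fin_numE ?Kset_fin// esum_ge0// => y _; rewrite lee_fin mulr_ge0.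
by move=> y _; rewrite gee0_abs// lee_fin mulr_ge0.
Qed.

Lemma Kset_Hop k x : Kset b c x0 k ->
  Hop b c k x = dc x * k x - fine (\esum_(y in [set: X]) (b x y * k y)%:E).
Proof.
move=> Kk; have [k0 _] := @Kset_props k Kk; have [b0 sb] := gb.
rewrite Hop_eq//; last exact: Kset_summable.
by rewrite /dc mulrDl addrAC [fine _ * k x]mulrC.
Qed.

Lemma harm_S f x : graph_harmonic b c f -> (forall y, 0 <= f y) ->
  \esum_(y in [set: X]) (b x y * f y)%:E = (dc x * f x)%:E.
Proof.
move=> [df Hf] f0; have [b0 sb] := gb.
have := Hf x; rewrite Hop_eq//.
move=> /eqP; rewrite addrAC subr_eq0 => /eqP hS.
have fS : \esum_(y in [set: X]) (b x y * f y)%:E \is a fin_num.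
  by apply: summable_fin => // y; rewrite lee_fin mulr_ge0.
by rewrite -(fineK fS) -hS /dc mulrDl [fine _ * f x]mulrC.
Qed.

End KProps.


Section Meas.
Context {X : countType} {R : realType}.

Lemma mproj (y : X) : measurable_fun [set: borelC X R] (fun k : borelC X R => k y).
Proof.
apply: (measurability _ (mathcomp.analysis.measurable_realfun.RGenOpens.measurableE R)).
move=> _ [_ [a [b' ->] <-]].
rewrite setTI; apply: sub_sigma_algebra.
have /continuousP := @proj_cont X R y.
by apply; exact: interval_open.
Qed.

End Meas.


Section IntSub.
Local Open Scope ereal_scope.
Context d (T : measurableType d) (R : realType).
Variable mu : {measure set T -> \bar R}.

Lemma int_mono_any (f1 f2 : T -> \bar R) : (forall x, 0 <= f1 x) ->
  (forall x, f1 x <= f2 x) ->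
  \int[mu]_(x in [set: T]) f1 x <= \int[mu]_(x in [set: T]) f2 x.
Proof.
move=> f10 f12.
have f20 : forall x, 0 <= f2 x by move=> x; exact: le_trans (f10 x) (f12 x).
rewrite !ge0_integralTE//.
apply/ge_ereal_sup => _ [h hf <-].
apply: ereal_sup_ubound; exists h => //= x.
exact: le_trans (hf x) (f12 x).
Qed.

Lemma int_E_D (E N : set T) (g : T -> \bar R) :
  measurable N -> mu N = 0 -> ~` E `<=` N -> measurable_fun [set: T] g ->
  (forall k, E k -> 0 <= g k) ->
  \int[mu]_(k in E) g k = \int[mu]_(k in ~` N) g k.
Proof.
move=> mN N0 EN mg g0.
have DE : ~` N `<=` E.
  by move=> k nk; apply: contrapT => nE; exact: nk (EN _ nE).
rewrite integral_mkcond [RHS]integral_mkcond.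
set hE := g \_ E; set hD := g \_ (~` N).
pose hN := hD \+ (cst +oo) \_ N.
have hE0 k : 0 <= hE k.
  by rewrite /hE patchE; case: ifPn => // /set_mem /g0.
have hD0 k : 0 <= hD k.
  by rewrite /hD patchE; case: ifPn => // /set_mem /DE /g0.
have hDE k : hD k <= hE k.
  rewrite /hD /hE !patchE; case: ifPn => [/set_mem kD|_].
    by rewrite ifT //; apply/mem_set; exact: DE.
  by move: (hE0 k); rewrite /hE patchE.
have hEN : forall z, hE z <= hN z.
  move=> z; rewrite /hN /hD /hE /= !patchE.
  case: (boolP (z \in N)) => kN.
    have := hD0 z; rewrite /hD patchE => h0.
    rewrite /= addey ?leey //; apply/negP => /eqP hh; move: h0; rewrite hh.
    by rewrite leNgt ltNy0.
  have zD : z \in ~` N by rewrite in_setC.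
  rewrite zD ifT; last by apply/mem_set; apply: DE; exact: set_mem.
  by rewrite /= adde0.
have mD : measurable (~` N) by exact: measurableC.
have mhD : measurable_fun [set: T] hD.
  exact: ((measurable_restrictT g mD).1 (measurable_funS measurableT (@subsetT _ _) mg)).
have mhN : measurable_fun [set: T] hN.
  apply: emeasurable_funD => //.
  exact: ((measurable_restrictT (cst +oo) mN).1 (measurable_cst _)).
have eqND : \int[mu]_(x in [set: T]) hN x = \int[mu]_(x in [set: T]) hD x.
  apply: ge0_ae_eq_integral => //.
  - move=> k _; rewrite /hN /=; apply: adde_ge0; first exact: hD0.
    by rewrite patchE; case: ifPn => _ /=; rewrite ?le0y.
  - exists N; split => // k /= /not_implyP [_ nk].
    apply: contrapT => kN; apply: nk.
    by rewrite /hN /= patchE ifN ?adde0 //; apply/negP => /set_mem.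
apply/eqP; rewrite eq_le; apply/andP; split.
  by rewrite -eqND; apply: int_mono_any.
exact: int_mono_any.
Qed.

End IntSub.


Theorem lemma3 (R : realType) (X : countType) (b : X -> X -> R) (c : X -> R)
  (G : Type) (mul : G -> G -> G) (inv : G -> G) (one : G) (act : G -> X -> X)
  (x0 : X) (Rg : set G) (f : X -> R)
  (mu : probability (borelC X R) R) :
  is_graph b -> graph_connected b ->
  is_group_action mul inv one act -> H_invariant inv act b c ->
  is_subgroup mul inv one Rg ->
  KRset inv act b c x0 Rg f -> graph_harmonic b c f ->
  mu.-negligible (~` extreme (KRset inv act b c x0 Rg)) ->
  (forall x, (f x)%:E = (\int[mu]_(k in extreme (KRset inv act b c x0 Rg)) (k x)%:E)%E) ->
  mu.-negligible [set k | extreme (KRset inv act b c x0 Rg) k /\ Hop b c k <> (fun _ => 0)].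
Proof.
move=> gb _ _ _ _ KRf harmf negE hint.
set K := KRset inv act b c x0 Rg.
set E := extreme K.
have [b0 sb] := gb.
have EK : forall k, E k -> Kset b c x0 k by move=> k [[Kk _] _].
have [N0 [mN0 N00 EN0]] := negE.
pose D := ~` N0.
have mD : measurable D by exact: measurableC.
have DE : D `<=` E by move=> k nk; apply: contrapT => nE; exact: nk (EN0 _ nE).
have [f0 _] := Kset_props b c x0 gb f KRf.1.
have k0 : forall k, D k -> forall y, 0 <= k y.
  by move=> k Dk; exact: (Kset_props b c x0 gb k (EK k (DE k Dk))).1.
have mpE y : measurable_fun [set: borelC X R] (fun k : borelC X R => (k y)%:E).
  exact: (measurable_EFinP _ (fun k : borelC X R => k y)).2 (mproj y).
have intD : forall y, (f y)%:E = (\int[mu]_(k in D) (k y)%:E)%E.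
  move=> y; rewrite hint; apply: int_E_D => //.
  by move=> k Ek; rewrite lee_fin; exact: (Kset_props b c x0 gb k (EK k Ek)).1.
have key : forall x, exists Nx : set (borelC X R),
    [/\ measurable Nx, mu Nx = 0 & forall k, D k -> Hop b c k x <> 0 -> Nx k].
  move=> x.
  pose psi := fun k : borelC X R => (\sum_(n <oo) ser (fun y => (b x y * k y)%:E) n)%E.
  pose phi := fun k : borelC X R => ((dc b c x * k x)%:E - psi k)%E.
  have psiE : forall k, D k -> psi k = \esum_(y in [set: X]) (b x y * k y)%:E.
    move=> k Dk; rewrite esum_ser // => y.
    by rewrite lee_fin mulr_ge0 // k0.
  have psi0 : forall k, D k -> (0 <= psi k)%E.
    by move=> k Dk; rewrite psiE // esum_ge0 // => y _; rewrite lee_fin mulr_ge0 // k0.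
  have psifin : forall k, D k -> psi k \is a fin_num.
    by move=> k Dk; rewrite psiE //; exact: Kset_fin b c x0 gb k x (EK k (DE k Dk)).
  have phi0 : forall k, D k -> (0 <= phi k)%E.
    move=> k Dk; rewrite /phi sube_ge0 ?psifin ?orbT // psiE //.
    exact: Kset_S b c x0 gb k x (EK k (DE k Dk)).
  have mterm : forall n, measurable_fun D
      (fun k : borelC X R => ser (fun y => (b x y * k y)%:E) n).
    move=> n; rewrite /ser; case: pickle_inv => [y|]; last exact: measurable_cst.
    apply: (measurable_funS measurableT (@subsetT _ _)).
    apply/measurable_EFinP; apply: measurable_funM; first exact: measurable_cst.
    exact: mproj.
  have term0 : forall n k, D k -> (0 <= ser (fun y => (b x y * k y)%:E) n)%E.
    move=> n k Dk; apply: ser_ge0 => y; by rewrite lee_fin mulr_ge0 // k0.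
  have mpsi : measurable_fun D psi.
    exact: (@ge0_emeasurable_sum _ _ _ D _ xpredT (fun n k Dk _ => term0 n k Dk) (fun n _ => mterm n)).
  have mdc : measurable_fun D (fun k : borelC X R => (dc b c x * k x)%:E).
    apply: (measurable_funS measurableT (@subsetT _ _)).
    apply/measurable_EFinP; apply: measurable_funM; first exact: measurable_cst.
    exact: mproj.
  have mphi : measurable_fun D phi by exact: emeasurable_funB.
  have int_psi : (\int[mu]_(k in D) psi k = (dc b c x * f x)%:E)%E.
    rewrite integral_nneseries //.
    transitivity (\sum_(n <oo) ser (fun y => (b x y * f y)%:E) n)%E.
      apply: eq_eseriesr => n _; rewrite /ser; case: pickle_inv => [y|].
        under eq_integral do rewrite EFinM.
        rewrite ge0_integralZl_EFin //.
        - by rewrite -intD -EFinM.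
        - by move=> k Dk; rewrite lee_fin k0.
        - exact: (measurable_funS measurableT (@subsetT _ _) (mpE y)).
      exact: integral0.
    rewrite -esum_ser; first exact: harm_S.
    by move=> y; rewrite lee_fin mulr_ge0.
  have int_dc : (\int[mu]_(k in D) (dc b c x * k x)%:E = (dc b c x * f x)%:E)%E.
    under eq_integral do rewrite EFinM.
    rewrite integralZl //; first by rewrite -intD EFinM.
    apply/integrableP; split.
      exact: (measurable_funS measurableT (@subsetT _ _) (mpE x)).
    rewrite (eq_integral (fun k : borelC X R => (k x)%:E)); first by rewrite -intD ltry.
    by move=> k /set_mem Dk; rewrite gee0_abs // lee_fin k0.
  have int_phi : (\int[mu]_(k in D) phi k = 0)%E.
    have := ge0_integralD mu mD phi0 mphi psi0 mpsi.
    rewrite (eq_integral (fun k : borelC X R => (dc b c x * k x)%:E)); last first.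
      by move=> k /set_mem Dk; rewrite /phi subeK // psifin.
    rewrite int_dc int_psi => h.
    have := congr1 (fun t => (t - (dc b c x * f x)%:E)%E) h.
    by rewrite addeK // subee.
  have : ae_eq mu D phi (cst 0).
    apply/(ae_eq_integral_abs mu mD mphi); rewrite -int_phi.
    by apply: eq_integral => k /set_mem Dk; rewrite gee0_abs // phi0.
  move=> [Nx [mNx Nx0 sub]]; exists Nx; split => // k Dk Hk.
  apply: sub => /= /(_ Dk) phik; apply: Hk.
  rewrite (Kset_Hop b c x0 gb k x (EK k (DE k Dk))).
  move: phik; rewrite /phi psiE // -[X in (_ - X)%E](fineK (Kset_fin b c x0 gb k x (EK k (DE k Dk)))).
  by rewrite -EFinB => -[].
have [Nf HNf] := choice key.
pose F (n : nat) : set (borelC X R) :=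
  if n is n'.+1 then (if @pickle_inv X n' is Some x then Nf x else set0) else N0.
have Fneg : forall n, mu.-negligible (F n).
  case=> [|n]; rewrite /F; first by exists N0; split.
  case: pickle_inv => [x|]; last by exists set0; split => //; exact: measure0.
  by have [mN N0x _] := HNf x; exists (Nf x); split.
have [A [mA A0 sA]] := negligible_bigcup Fneg.
exists A; split => // k [Ek Hk]; apply: sA.
have [kN|kN] := pselect (N0 k); first by exists 0%N.
have Dk : D k by [].
have [x Hx] : exists x, Hop b c k x <> 0.
  apply: contrapT => hn; apply: Hk; apply/funext => x.
  by apply: contrapT => hx; apply: hn; exists x.
exists (pickle x).+1 => //=; rewrite pickleK_inv.
by have [_ _ h] := HNf x; apply: h.
Qed.
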